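(* Let $d,K\ge2$, $a^\dagger\in\{1,\dots,K\}$, $\upsilon>0$, $\delta\in(0,1)$, $\xi>0$, $x^\dagger\in\mathbb{R}^d$. For each arm $a$ let $\hat\theta_a\in\mathbb{R}^d$ and $\widetilde V_a\in\mathbb{R}^{d\times d}$ be symmetric positive definite, and for $a\ne a^\dagger$ put $A_a=\widetilde V_a^{-1}+\widetilde V_{a^\dagger}^{-1}$ and $$\mathcal C'_a=\Big\{z\in\mathbb{R}^d:\ \|z-\hat\theta_a\|_{A_a^{-1}}\le \upsilon\,\Phi^{-1}\Big(1-\tfrac{\delta}{K-1}\Big)\Big\}.$$ Then for every $y\in\mathbb{R}^d$ and $a\neq a^\dagger$, the inequality $$\langle x^\dagger+y,\hat\theta_{a^\dagger}-\hat\theta_a\rangle-\xi\ \ge\ \upsilon\,\Phi^{-1}\Big(1-\tfrac{\delta}{K-1}\Big)\,\|x^\dagger+y\|_{\widetilde V_a^{-1}+\widetilde V_{a^\dagger}^{-1}}$$ is equivalent to $\langle x^\dagger+y,\hat\theta_{a^\dagger}\rangle-\xi\ge\max_{z\in\mathcal C'_a}\langle z,x^\dagger+y\rangle$; consequently, the problem of minimizing $\|y\|$ subject to this inequality for all $a\neq a^\dagger$ is feasible if and only if $\hat\theta_{a^\dagger}\notin\mathrm{Conv}\big(\bigcup_{a\neq a^\dagger}\mathcal C'_a\big)$.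
   Context: $\Phi$ is the standard normal cumulative distribution function; $\|x\|_V=\sqrt{x^\top Vx}$; $\mathrm{Conv}$ is the convex hull. This is the relaxed attacker problem against Linear Thompson Sampling (posterior samples $\tilde\theta_a\sim\mathcal N(\hat\theta_a,\upsilon^2\widetilde V_a^{-1})$), i.e. a second-order cone program. (For the equivalence, $\Phi^{-1}(1-\delta/(K-1))\ge0$ is assumed, i.e. $\delta\le (K-1)/2$.) *)

(* Defs.v *)
From Stdlib Require Import Reals Lra Lia.
Open Scope R_scope.

Definition gauss (t : R) : R := exp (- (t * t) / 2).

Lemma gauss_cont : continuity gauss.
Proof.
  unfold gauss. apply continuity_comp with (f1 := fun t => - (t * t) / 2).
  - reg.
  - apply derivable_continuous, derivable_exp.
Qed.

Lemma gauss_integrable (a b : R) : Riemann_integrable gauss a b.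
Proof.
  destruct (Rle_dec a b) as [H|H].
  - apply continuity_implies_RiemannInt; [exact H|intros; apply gauss_cont].
  - apply RiemannInt_P1, continuity_implies_RiemannInt; [lra|intros; apply gauss_cont].
Qed.

Definition Phi (x : R) : R :=
  / 2 + / sqrt (2 * PI) * RiemannInt (gauss_integrable 0 x).

(* ---------- Finite-dimensional linear algebra, vectors = nat -> R (coords < d) ---------- *)
Fixpoint rsum (n : nat) (f : nat -> R) : R :=
  match n with O => 0 | S m => rsum m f + f m end.

Definition vec := nat -> R.
Definition mat := nat -> nat -> R.

Definition vadd (x y : vec) : vec := fun i => x i + y i.
Definition vsub (x y : vec) : vec := fun i => x i - y i.
Definition madd (M N : mat) : mat := fun i j => M i j + N i j.

Definition dot (d : nat) (x y : vec) : R := rsum d (fun i => x i * y i).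
Definition mv (d : nat) (M : mat) (x : vec) : vec := fun i => rsum d (fun j => M i j * x j).
Definition Mnorm (d : nat) (M : mat) (x : vec) : R := sqrt (dot d x (mv d M x)).

Definition symmetric (d : nat) (M : mat) : Prop :=
  forall i j, (i < d)%nat -> (j < d)%nat -> M i j = M j i.
Definition posdef (d : nat) (M : mat) : Prop :=
  forall x : vec, (exists i, (i < d)%nat /\ x i <> 0) -> 0 < dot d x (mv d M x).
Definition is_inv (d : nat) (M N : mat) : Prop :=
  forall i j, (i < d)%nat -> (j < d)%nat ->
    rsum d (fun k => M i k * N k j) = if Nat.eqb i j then 1 else 0.

Definition is_max (S : R -> Prop) (m : R) : Prop :=
  S m /\ forall v, S v -> v <= m.

Definition conv (d : nat) (S : vec -> Prop) (x : vec) : Prop :=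
  exists (n : nat) (lam : nat -> R) (p : nat -> vec),
    (forall k, (k < n)%nat -> 0 <= lam k /\ S (p k)) /\
    rsum n lam = 1 /\
    forall i, (i < d)%nat -> x i = rsum n (fun k => lam k * p k i).

(* Main.v *)
Require Import Defs.
From Stdlib Require Import Reals Lra Lia FunctionalExtensionality ClassicalEpsilon Classical List ZArith.
Open Scope R_scope.

Lemma rsum_ext n f g : (forall k, (k < n)%nat -> f k = g k) -> rsum n f = rsum n g.
Proof. induction n; simpl; intros H; auto. rewrite IHn by (intros; apply H; lia). rewrite H by lia. auto. Qed.

Lemma rsum_plus n f g : rsum n (fun k => f k + g k) = rsum n f + rsum n g.
Proof. induction n; simpl; [lra|rewrite IHn; lra]. Qed.

Lemma rsum_minus n f g : rsum n (fun k => f k - g k) = rsum n f - rsum n g.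
Proof. induction n; simpl; [lra|rewrite IHn; lra]. Qed.

Lemma rsum_scal n c f : rsum n (fun k => c * f k) = c * rsum n f.
Proof. induction n; simpl; [lra|rewrite IHn; lra]. Qed.

Lemma rsum_scalr n c f : rsum n (fun k => f k * c) = rsum n f * c.
Proof. induction n; simpl; [lra|rewrite IHn; lra]. Qed.

Lemma rsum_zero n f : (forall k, (k < n)%nat -> f k = 0) -> rsum n f = 0.
Proof. intros H. rewrite (rsum_ext n f (fun _ => 0)) by auto. induction n; simpl; auto. rewrite IHn; [lra|]. intros; apply H; lia. Qed.

Lemma rsum_swap n m f : rsum n (fun i => rsum m (fun j => f i j)) = rsum m (fun j => rsum n (fun i => f i j)).
Proof. induction n; simpl. { rewrite rsum_zero; auto. } rewrite IHn. rewrite <- rsum_plus. auto. Qed.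

Lemma rsum_kron n i f : (i < n)%nat -> rsum n (fun k => if Nat.eqb k i then f k else 0) = f i.
Proof. induction n; intros H; [lia|]. simpl. destruct (Nat.eqb n i) eqn:E.
 - apply Nat.eqb_eq in E; subst. rewrite rsum_zero; [lra|]. intros k Hk. destruct (Nat.eqb k i) eqn:E2; auto. apply Nat.eqb_eq in E2; lia.
 - apply Nat.eqb_neq in E. rewrite IHn by lia. lra. Qed.

Lemma rsum_kron' n i f : (i < n)%nat -> rsum n (fun k => f k * (if Nat.eqb k i then 1 else 0)) = f i.
Proof. intros H. rewrite <- (rsum_kron n i f H). apply rsum_ext; intros k _. destruct (Nat.eqb k i); lra. Qed.

Lemma rsum_kron'' n i f : (i < n)%nat -> rsum n (fun k => (if Nat.eqb i k then 1 else 0) * f k) = f i.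
Proof. intros H. rewrite <- (rsum_kron n i f H). apply rsum_ext; intros k _. rewrite Nat.eqb_sym. destruct (Nat.eqb k i); lra. Qed.

Lemma rsum_nonneg n f : (forall k, (k < n)%nat -> 0 <= f k) -> 0 <= rsum n f.
Proof. induction n; simpl; intros H; [lra|]. pose proof (H n ltac:(lia)). pose proof (IHn ltac:(intros; apply H; lia)). lra. Qed.

Lemma rsum_le_term n f i : (forall k, (k < n)%nat -> 0 <= f k) -> (i < n)%nat -> f i <= rsum n f.
Proof. induction n; simpl; intros H Hi; [lia|]. destruct (Nat.eq_dec i n).
 - subst. pose proof (rsum_nonneg n f ltac:(intros; apply H; lia)). lra.
 - pose proof (IHn ltac:(intros; apply H; lia) ltac:(lia)). pose proof (H n ltac:(lia)). lra. Qed.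

Lemma rsum_sq_zero n f : rsum n (fun k => f k * f k) = 0 -> forall k, (k < n)%nat -> f k = 0.
Proof. intros H k Hk. pose proof (rsum_le_term n (fun k => f k * f k) k ltac:(intros; nra) Hk). simpl in H0. nra. Qed.

Lemma cv_rsum n (f : nat -> nat -> R) g : (forall k, (k < n)%nat -> Un_cv (fun m => f k m) (g k)) ->
  Un_cv (fun m => rsum n (fun k => f k m)) (rsum n g).
Proof. induction n; simpl; intros H.
 - intros e He. exists O. intros. unfold Rdist. rewrite Rminus_diag, Rabs_R0. auto.
 - apply CV_plus; [apply IHn; intros; apply H; lia| apply H; lia]. Qed.

Lemma dot_ext d x y x' y' : (forall i, (i < d)%nat -> x i = x' i) -> (forall i, (i < d)%nat -> y i = y' i) -> dot d x y = dot d x' y'.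
Proof. intros H1 H2. unfold dot. apply rsum_ext. intros. rewrite H1, H2; auto. Qed.

Lemma dot_comm d x y : dot d x y = dot d y x.
Proof. unfold dot. apply rsum_ext; intros; ring. Qed.

Lemma dot_addl d x y z : dot d (vadd x y) z = dot d x z + dot d y z.
Proof. unfold dot, vadd. rewrite <- rsum_plus. apply rsum_ext; intros; ring. Qed.
Lemma dot_subl d x y z : dot d (vsub x y) z = dot d x z - dot d y z.
Proof. unfold dot, vsub. rewrite <- rsum_minus. apply rsum_ext; intros; ring. Qed.
Lemma dot_addr d x y z : dot d z (vadd x y) = dot d z x + dot d z y.
Proof. rewrite !(dot_comm d z). apply dot_addl. Qed.
Lemma dot_subr d x y z : dot d z (vsub x y) = dot d z x - dot d z y.
Proof. rewrite !(dot_comm d z). apply dot_subl. Qed.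
Definition vscal (c : R) (x : vec) : vec := fun i => c * x i.
Lemma dot_scall d c x y : dot d (vscal c x) y = c * dot d x y.
Proof. unfold dot, vscal. rewrite <- rsum_scal. apply rsum_ext; intros; ring. Qed.
Lemma dot_scalr d c x y : dot d y (vscal c x) = c * dot d y x.
Proof. rewrite !(dot_comm d y). apply dot_scall. Qed.
Lemma dot_self_nonneg d x : 0 <= dot d x x.
Proof. apply rsum_nonneg; intros; nra. Qed.

Lemma mv_add d M x y : mv d M (vadd x y) = vadd (mv d M x) (mv d M y).
Proof. apply functional_extensionality; intro i. unfold mv, vadd. rewrite <- rsum_plus. apply rsum_ext; intros; ring. Qed.
Lemma mv_sub d M x y : mv d M (vsub x y) = vsub (mv d M x) (mv d M y).
Proof. apply functional_extensionality; intro i. unfold mv, vsub. rewrite <- rsum_minus. apply rsum_ext; intros; ring. Qed.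
Lemma mv_scal d M c x : mv d M (vscal c x) = vscal c (mv d M x).
Proof. apply functional_extensionality; intro i. unfold mv, vscal. rewrite <- rsum_scal. apply rsum_ext; intros; ring. Qed.
Lemma mv_madd d M N x : mv d (madd M N) x = vadd (mv d M x) (mv d N x).
Proof. apply functional_extensionality; intro i. unfold mv, vadd, madd. rewrite <- rsum_plus. apply rsum_ext; intros; ring. Qed.
Lemma mv_ext d M x y : (forall i, (i < d)%nat -> x i = y i) -> mv d M x = mv d M y.
Proof. intros H. apply functional_extensionality; intro i. unfold mv. apply rsum_ext; intros; rewrite H; auto. Qed.

Definition mm d (M N : mat) : mat := fun i j => rsum d (fun k => M i k * N k j).

Lemma mm_assoc d L M N i j : mm d (mm d L M) N i j = mm d L (mm d M N) i j.
Proof. unfold mm. transitivity (rsum d (fun k => rsum d (fun l => L i l * M l k * N k j))).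
 - apply rsum_ext; intros. rewrite <- rsum_scalr. auto.
 - rewrite rsum_swap. apply rsum_ext; intros. rewrite <- rsum_scal. apply rsum_ext; intros; ring. Qed.

Lemma mv_mv d M N x i : mv d M (mv d N x) i = rsum d (fun k => mm d M N i k * x k).
Proof. unfold mv, mm. transitivity (rsum d (fun j => rsum d (fun k => M i j * N j k * x k))).
 - apply rsum_ext; intros. rewrite <- rsum_scal. apply rsum_ext; intros; ring.
 - rewrite rsum_swap. apply rsum_ext; intros. rewrite <- rsum_scalr. auto. Qed.

Lemma mv_inv d M N x i : is_inv d M N -> (i < d)%nat -> mv d M (mv d N x) i = x i.
Proof. intros H Hi. rewrite mv_mv. rewrite <- (rsum_kron'' d i x Hi). apply rsum_ext; intros. unfold mm. rewrite H; auto. Qed.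

Lemma inv_sym d M N : symmetric d M -> is_inv d M N -> symmetric d N /\ is_inv d N M.
Proof. intros HS HI.
 set (L := fun i j => N j i).
 assert (HL : forall i j, (i < d)%nat -> (j < d)%nat -> mm d L M i j = if Nat.eqb i j then 1 else 0).
 { intros i j Hi Hj. unfold mm, L. rewrite Nat.eqb_sym. rewrite <- (HI j i Hj Hi). apply rsum_ext; intros. rewrite HS by auto. ring. }
 assert (HLN : forall i j, (i < d)%nat -> (j < d)%nat -> L i j = N i j).
 { intros i j Hi Hj. transitivity (mm d L (mm d M N) i j).
   - unfold mm at 1. rewrite <- (rsum_kron' d j (L i) Hj). apply rsum_ext; intros. fold (mm d M N k j). unfold mm. rewrite HI; auto.
   - rewrite <- mm_assoc. unfold mm at 1. rewrite <- (rsum_kron'' d i (fun k => N k j) Hi). apply rsum_ext; intros. fold (mm d L M i k). rewrite HL; auto. }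
 split.
 - intros i j Hi Hj. rewrite <- HLN by auto. reflexivity.
 - intros i j Hi Hj. rewrite <- HL by auto. unfold mm. apply rsum_ext; intros. rewrite HLN; auto. Qed.

Definition psd d (M : mat) := forall x, 0 <= dot d x (mv d M x).

Lemma posdef_psd d M : posdef d M -> psd d M.
Proof. intros H x. destruct (classic (exists i, (i < d)%nat /\ x i <> 0)) as [E|E].
 - apply Rlt_le, H, E.
 - right. symmetry. unfold dot. apply rsum_zero. intros k Hk. destruct (Req_dec (x k) 0) as [Z|Z]; [rewrite Z; ring|]. exfalso; eauto. Qed.

Lemma inv_psd d M N : psd d M -> is_inv d M N -> psd d N.
Proof. intros HP HI x. set (u := mv d N x).
 rewrite (dot_ext d x u (mv d M u) u); [| intros; unfold u; symmetry; apply mv_inv; auto | auto].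
 rewrite dot_comm. apply HP. Qed.

Lemma psd_add d M N : psd d M -> psd d N -> psd d (madd M N).
Proof. intros H1 H2 x. rewrite mv_madd, dot_addr. pose proof (H1 x); pose proof (H2 x); lra. Qed.

Lemma sym_add d M N : symmetric d M -> symmetric d N -> symmetric d (madd M N).
Proof. intros H1 H2 i j Hi Hj. unfold madd. rewrite H1, H2; auto. Qed.

Lemma bil_sym d M u v : symmetric d M -> dot d u (mv d M v) = dot d v (mv d M u).
Proof. intros HS. unfold dot, mv. transitivity (rsum d (fun i => rsum d (fun j => u i * M i j * v j))).
 - apply rsum_ext; intros. rewrite <- rsum_scal. apply rsum_ext; intros; ring.
 - rewrite rsum_swap. apply rsum_ext; intros. rewrite <- rsum_scal. apply rsum_ext; intros. rewrite HS by auto. ring. Qed.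

Lemma cauchy_schwarz d M u v : symmetric d M -> psd d M ->
  (dot d u (mv d M v))^2 <= dot d u (mv d M u) * dot d v (mv d M v).
Proof. intros HS HP.
 set (a := dot d u (mv d M u)). set (b := dot d u (mv d M v)). set (c := dot d v (mv d M v)).
 assert (Hq : forall t, 0 <= a + 2 * t * b + t * t * c).
 { intros t. pose proof (HP (vadd u (vscal t v))) as H.
   rewrite mv_add, mv_scal, !dot_addl, !dot_addr, !dot_scall, !dot_scalr in H.
   rewrite (bil_sym d M v u HS) in H. fold a b c in H. replace (a + 2*t*b + t*t*c) with (a + t * b + (t * b + t * (t * c))) by ring; exact H. }
 pose proof (Hq 0). destruct (Req_dec c 0) as [Hc|Hc].
 - destruct (Req_dec b 0) as [Hb|Hb]. { rewrite Hb. nra. }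
   exfalso. set (t := - (a + 1) / (2 * b)). specialize (Hq t).
   assert (Hx : a + 2 * t * b + t * t * c = -1) by (rewrite Hc; unfold t; field; auto). lra.
 - assert (c > 0) by (pose proof (HP v); fold c in H0; lra).
   specialize (Hq (- b / c)).
   replace (a + 2 * (- b / c) * b + - b / c * (- b / c) * c) with (a - b * b / c) in Hq by (field; lra).
   assert (0 <= (a - b*b/c) * c) by nra. replace ((a - b*b/c)*c) with (a*c - b*b) in H1 by (field; lra). replace (b^2) with (b*b) by ring. lra. Qed.

Lemma choice_fun {A B : Type} (P : A -> B -> Prop) : (forall x, exists y, P x y) -> exists f, forall x, P x (f x).
Proof. intros H. exists (fun x => proj1_sig (constructive_indefinite_description _ (H x))).
 intros x. exact (proj2_sig (constructive_indefinite_description _ (H x))). Qed.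

Lemma arch_inv eps : 0 < eps -> exists N : nat, / (INR N + 1) < eps.
Proof. intros He. destruct (archimed (/ eps)) as [H1 _].
 assert (0 < /eps) by (apply Rinv_0_lt_compat; auto).
 exists (Z.to_nat (up (/eps))). rewrite INR_IZR_INZ, Z2Nat.id.
 2:{ apply le_IZR. lra. }
 assert (0 < IZR (up (/eps)) + 1) by lra.
 assert (H3 : / eps < IZR (up (/eps)) + 1) by lra.
 apply Rinv_lt_contravar in H3; [|apply Rmult_lt_0_compat; lra]. rewrite Rinv_inv in H3. exact H3. Qed.

Lemma inv_le_mono (m n : nat) : (m <= n)%nat -> / (INR n + 1) <= / (INR m + 1).
Proof. intros H. apply Rinv_le_contravar. pose proof (pos_INR m); lra. apply le_INR in H. lra. Qed.

Definition incr (phi : nat -> nat) := forall m, (phi m < phi (S m))%nat.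

Lemma incr_ge phi : incr phi -> forall m, (m <= phi m)%nat.
Proof. intros H m. induction m; [lia|]. specialize (H m). lia. Qed.

Lemma incr_mono phi : incr phi -> forall m n, (m <= n)%nat -> (phi m <= phi n)%nat.
Proof. intros H m n Hmn. induction Hmn; auto. specialize (H m0). lia. Qed.

Lemma incr_comp phi psi : incr phi -> incr psi -> incr (fun m => phi (psi m)).
Proof. intros H1 H2 m. specialize (H2 m). pose proof (incr_mono phi H1 (S (psi m)) (psi (S m)) ltac:(lia)). specialize (H1 (psi m)). lia. Qed.

Lemma cv_sub u l phi : Un_cv u l -> incr phi -> Un_cv (fun m => u (phi m)) l.
Proof. intros H Hp e He. destruct (H e He) as [N HN]. exists N. intros n Hn. apply HN.
 pose proof (incr_ge phi Hp n). lia. Qed.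

Lemma bw1 (u : nat -> R) B : (forall m, Rabs (u m) <= B) -> exists phi l, incr phi /\ Un_cv (fun m => u (phi m)) l.
Proof. intros HB. destruct (Bolzano_Weierstrass u (fun c => - B <= c <= B) (compact_P3 (-B) B)) as [l Hl].
 { intros n. specialize (HB n). pose proof (Rle_abs (u n)); pose proof (Rle_abs (- u n)); rewrite Rabs_Ropp in *; lra. }
 assert (Hg : forall N k, exists p, (N <= p)%nat /\ Rabs (u p - l) < / (INR k + 1)).
 { intros N k. assert (Hp : 0 < / (INR k + 1)) by (apply Rinv_0_lt_compat; pose proof (pos_INR k); lra).
   destruct (Hl (disc l (mkposreal _ Hp)) N) as [p [Hp1 Hp2]].
   { exists (mkposreal _ Hp). intros y Hy. auto. }
   exists p. split; auto. }
 destruct (choice_fun (fun Nk p => (fst Nk <= p)%nat /\ Rabs (u p - l) < / (INR (snd Nk) + 1))) as [g Hg'].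
 { intros [N k]. apply Hg. }
 set (phi := fix phi k := match k with O => g (O, O) | S k' => g (S (phi k'), S k') end).
 assert (Hphi : forall k, Rabs (u (phi k) - l) < / (INR k + 1)).
 { intros [|k]; [exact (proj2 (Hg' (O,O)))|exact (proj2 (Hg' (S (phi k), S k)))]. }
 exists phi, l. split.
 - intros m. simpl. destruct (Hg' (S (phi m), S m)) as [H _]. simpl in H. lia.
 - intros e He. destruct (arch_inv e He) as [N HN]. exists N. intros n Hn. unfold Rdist.
   pose proof (Hphi n). pose proof (inv_le_mono N n Hn). lra. Qed.

Lemma bwL {I : Type} (L : list I) (u : I -> nat -> R) :
  (forall j, In j L -> exists B, forall m, Rabs (u j m) <= B) ->
  exists phi (lim : I -> R), incr phi /\ forall j, In j L -> Un_cv (fun m => u j (phi m)) (lim j).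
Proof. induction L as [|j0 L IH]; intros HB.
 - exists (fun m => m), (fun _ => 0). split. intros m; lia. intros j [].
 - destruct IH as [phi [lim [Hp Hl]]]. { intros; apply HB; simpl; auto. }
   destruct (HB j0 (or_introl eq_refl)) as [B HBj].
   destruct (bw1 (fun m => u j0 (phi m)) B) as [psi [l [Hpsi Hcv]]]. { intros; apply HBj. }
   exists (fun m => phi (psi m)).
   destruct (classic (exists l', Un_cv (fun m => u j0 (phi (psi m))) l')) as [_|NE]; [|exfalso; eauto].
   exists (fun j => match excluded_middle_informative (j = j0) with left _ => l | right _ => lim j end).
   split. apply incr_comp; auto.
   intros j Hj. destruct (excluded_middle_informative (j = j0)) as [E|E].
   + subst. auto.
   + destruct Hj as [Hj|Hj]; [congruence|]. apply (cv_sub (fun m => u j (phi m))); auto. Qed.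

Lemma lim_le u v l1 l2 : Un_cv u l1 -> Un_cv v l2 -> (forall m, u m <= v m) -> l1 <= l2.
Proof. intros H1 H2 H. destruct (Rle_or_lt l1 l2) as [|Hlt]; auto. exfalso.
 set (e := (l1 - l2) / 2). assert (He : 0 < e) by (unfold e; lra).
 destruct (H1 e He) as [N1 HN1]. destruct (H2 e He) as [N2 HN2].
 specialize (HN1 (N1 + N2)%nat ltac:(lia)). specialize (HN2 (N1 + N2)%nat ltac:(lia)). specialize (H (N1+N2)%nat).
 unfold Rdist in *. apply Rabs_def2 in HN1. apply Rabs_def2 in HN2. unfold e in *. lra. Qed.

Lemma cv_const c : Un_cv (fun _ => c) c.
Proof. intros e He. exists O. intros. unfold Rdist. rewrite Rminus_diag, Rabs_R0. auto. Qed.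

Lemma cv_inv_seq : Un_cv (fun m => / (INR m + 1)) 0.
Proof. intros e He. destruct (arch_inv e He) as [N HN]. exists N. intros n Hn. unfold Rdist.
 rewrite Rminus_0_r. assert (0 < / (INR n + 1)) by (apply Rinv_0_lt_compat; pose proof (pos_INR n); lra).
 rewrite Rabs_pos_eq by lra. pose proof (inv_le_mono N n Hn). lra. Qed.

Lemma vsub_self x : vsub x x = fun _ => 0.
Proof. apply functional_extensionality; intros; unfold vsub; ring. Qed.

Lemma dot_zero_l d y : dot d (fun _ => 0) y = 0.
Proof. unfold dot. apply rsum_zero; intros; ring. Qed.

Lemma Mnorm_zero d M : Mnorm d M (fun _ => 0) = 0.
Proof. unfold Mnorm. rewrite dot_zero_l. apply sqrt_0. Qed.

Lemma Mnorm_sq d M v : psd d M -> Mnorm d M v * Mnorm d M v = dot d v (mv d M v).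
Proof. intros H. unfold Mnorm. apply sqrt_sqrt. apply H. Qed.

Lemma Mnorm_nonneg d M v : 0 <= Mnorm d M v.
Proof. apply sqrt_pos. Qed.

Lemma Q_norm_iff d M v r : psd d M -> 0 <= r -> (Mnorm d M v <= r <-> dot d v (mv d M v) <= r * r).
Proof. intros HP Hr. rewrite <- (Mnorm_sq d M v HP). pose proof (Mnorm_nonneg d M v). split; intros; nra. Qed.

Lemma cs_norm d M u v : symmetric d M -> psd d M -> dot d u (mv d M v) <= Mnorm d M u * Mnorm d M v.
Proof. intros HS HP. pose proof (cauchy_schwarz d M u v HS HP) as H.
 rewrite <- (Mnorm_sq d M u HP), <- (Mnorm_sq d M v HP) in H.
 pose proof (Mnorm_nonneg d M u). pose proof (Mnorm_nonneg d M v).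
 set (b := dot d u (mv d M v)) in *. set (p := Mnorm d M u * Mnorm d M v).
 assert (0 <= p) by (unfold p; nra). assert (b*b <= p*p) by (unfold p; nra). nra. Qed.

Lemma is_max_unique S m1 m2 : is_max S m1 -> is_max S m2 -> m1 = m2.
Proof. intros [H1 H1'] [H2 H2']. apply Rle_antisym; auto. Qed.

Lemma support_max d A Ai th w r : symmetric d A -> psd d A -> is_inv d A Ai -> 0 <= r ->
  is_max (fun v => exists z, Mnorm d Ai (vsub z th) <= r /\ v = dot d z w)
         (dot d th w + r * Mnorm d A w).
Proof. intros HS HP HI Hr. destruct (inv_sym d A Ai HS HI) as [HSi HIi].
 pose proof (inv_psd d A Ai HP HI) as HPi.
 assert (Hww : dot d (mv d A w) (mv d Ai (mv d A w)) = dot d w (mv d A w)).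
 { rewrite dot_comm. rewrite (dot_ext d (mv d Ai (mv d A w)) (mv d A w) w (mv d A w)); auto.
   intros; apply mv_inv; auto. }
 split.
 - set (n := Mnorm d A w). destruct (Req_dec n 0) as [Hn|Hn].
   + exists th. rewrite vsub_self, Mnorm_zero. split; [auto|]. rewrite Hn. ring.
   + assert (Hnp : 0 < n) by (pose proof (Mnorm_nonneg d A w); fold n in H; lra).
     assert (Hn2 : dot d w (mv d A w) = n*n) by (unfold n; symmetry; apply Mnorm_sq; auto).
     exists (vadd th (vscal (r / n) (mv d A w))).
     assert (E : vsub (vadd th (vscal (r / n) (mv d A w))) th = vscal (r/n) (mv d A w)).
     { apply functional_extensionality; intros; unfold vsub, vadd, vscal; ring. }
     rewrite E. split.
     * apply Q_norm_iff; auto. rewrite mv_scal, dot_scall, dot_scalr. rewrite Hww, Hn2. right. field. lra.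
     * rewrite dot_addl, dot_scall, (dot_comm d (mv d A w)), Hn2. field. lra.
 - intros v [z [Hz ->]]. replace z with (vadd th (vsub z th)) at 1
     by (apply functional_extensionality; intros; unfold vadd, vsub; ring).
   rewrite dot_addl. apply Rplus_le_compat_l.
   rewrite (dot_ext d (vsub z th) w (vsub z th) (mv d Ai (mv d A w))); auto.
   2:{ intros; symmetry; apply mv_inv; auto. }
   eapply Rle_trans; [apply cs_norm; auto|].
   assert (Mnorm d Ai (mv d A w) = Mnorm d A w) as ->. { unfold Mnorm. rewrite Hww. auto. }
   apply Rmult_le_compat_r; auto. apply Mnorm_nonneg. Qed.

Lemma Phi_neg c : c < 0 -> Phi c < / 2.
Proof. intros Hc. unfold Phi.
 assert (Hs : 0 < / sqrt (2 * PI)). { apply Rinv_0_lt_compat, sqrt_lt_R0. pose proof PI_RGT_0; lra. }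
 assert (HI : 0 < RiemannInt (gauss_integrable c 0)).
 { set (m := exp (- (c * c) / 2)).
   assert (Hm : 0 < m) by apply exp_pos.
   pose proof (RiemannInt_P19 (RiemannInt_P14 c 0 m) (gauss_integrable c 0) ltac:(lra)) as H.
   rewrite RiemannInt_P15 in H.
   assert (m * (0 - c) <= RiemannInt (gauss_integrable c 0)); [|nra].
   apply H. intros x Hx. unfold fct_cte, gauss, m.
   destruct (Req_dec (- (c*c)/2) (- (x*x)/2)) as [E|E]; [rewrite E; lra|].
   left. apply exp_increasing. nra. }
 rewrite (RiemannInt_P8 (gauss_integrable 0 c) (gauss_integrable c 0)). nra. Qed.

Definition cvv d (x : nat -> vec) (l : vec) := forall i, (i < d)%nat -> Un_cv (fun m => x m i) (l i).

Lemma cv_dot d x y lx ly : cvv d x lx -> cvv d y ly -> Un_cv (fun m => dot d (x m) (y m)) (dot d lx ly).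
Proof. intros H1 H2. unfold dot. apply (cv_rsum d (fun k m => x m k * y m k)). intros; apply CV_mult; auto. Qed.

Lemma cv_mv d M x lx : cvv d x lx -> cvv d (fun m => mv d M (x m)) (mv d M lx).
Proof. intros H i Hi. unfold mv. apply (cv_rsum d (fun k m => M i k * x m k)). intros; apply CV_mult; auto. apply cv_const. Qed.

Lemma cv_quad d M x lx : cvv d x lx -> Un_cv (fun m => dot d (x m) (mv d M (x m))) (dot d lx (mv d M lx)).
Proof. intros H. apply cv_dot; auto. apply cv_mv; auto. Qed.

Lemma cvv_sub d x lx y ly : cvv d x lx -> cvv d y ly -> cvv d (fun m => vsub (x m) (y m)) (vsub lx ly).
Proof. intros H1 H2 i Hi. unfold vsub. apply CV_minus; auto. Qed.

Lemma cvv_const d v : cvv d (fun _ => v) v.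
Proof. intros i Hi. apply cv_const. Qed.

Definition Cq d (M : mat) (th : vec) r (z : vec) := dot d (vsub z th) (mv d M (vsub z th)) <= r * r.

Lemma Cq_convex d M th r x y al be : symmetric d M -> psd d M -> 0 <= r ->
  Cq d M th r x -> Cq d M th r y -> 0 <= al -> 0 <= be -> al + be = 1 ->
  Cq d M th r (fun i => al * x i + be * y i).
Proof. intros HS HP Hr Hx Hy Ha Hb Hab. unfold Cq in *.
 assert (E : vsub (fun i => al * x i + be * y i) th = vadd (vscal al (vsub x th)) (vscal be (vsub y th))).
 { apply functional_extensionality; intros i. unfold vsub, vadd, vscal. replace (th i) with ((al+be) * th i) at 1 by (rewrite Hab; ring). ring. }
 rewrite E. set (u := vsub x th) in *. set (v := vsub y th) in *.
 rewrite mv_add, !mv_scal, !dot_addl, !dot_addr, !dot_scall, !dot_scalr.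
 rewrite (bil_sym d M v u HS).
 pose proof (cauchy_schwarz d M u v HS HP) as CS.
 set (qu := dot d u (mv d M u)) in *. set (qv := dot d v (mv d M v)) in *. set (b := dot d u (mv d M v)) in *.
 assert (0 <= qu) by apply HP. assert (0 <= qv) by apply HP.
 assert (b * b <= (r*r) * (r*r)). { replace (b*b) with (b^2) by ring. eapply Rle_trans; [exact CS|]. apply Rmult_le_compat; auto. }
 assert (b <= r * r) by nra.
 assert (al * (al * qu) + al * (be * b) + (be * (al * b) + be * (be * qv)) <= al*al*(r*r) + 2*al*be*(r*r) + be*be*(r*r)).
 { assert (al*al*qu <= al*al*(r*r)) by (apply Rmult_le_compat_l; nra).
   assert (be*be*qv <= be*be*(r*r)) by (apply Rmult_le_compat_l; nra).
   assert (al*be*b <= al*be*(r*r)) by (apply Rmult_le_compat_l; nra). nra. }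
 replace (r*r) with ((al+be)*(al+be)*(r*r)) at 3 by (rewrite Hab; ring). nra. Qed.

Lemma conv_mono d (S S' : vec -> Prop) x : (forall z, S z -> S' z) -> conv d S x -> conv d S' x.
Proof. intros H [n [lam [p [H1 [H2 H3]]]]]. exists n, lam, p. split; auto. intros k Hk. destruct (H1 k Hk); auto. Qed.

Definition pick (adag a0 a : nat) : nat := if Nat.eqb a adag then a0 else a.
Definition Param d K adag a0 (th : nat -> vec) (Ai : nat -> mat) r (mu : nat -> R) (z : nat -> vec) :=
  (forall a, (a<K)%nat -> 0 <= mu a /\ Cq d (Ai (pick adag a0 a)) (th (pick adag a0 a)) r (z a)) /\
  mu adag = 0 /\ rsum K mu = 1.
Definition img K (mu : nat -> R) (z : nat -> vec) : vec := fun i => rsum K (fun a => mu a * z a i).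
Definition dist2 d (T s : vec) := dot d (vsub T s) (vsub T s).

Lemma pick_prop K adag a0 a : (a0 < K)%nat -> a0 <> adag -> (a < K)%nat -> (pick adag a0 a < K)%nat /\ pick adag a0 a <> adag.
Proof. intros. unfold pick. destruct (Nat.eqb a adag) eqn:E; [auto|]. apply Nat.eqb_neq in E. auto. Qed.

Lemma param_conv d K adag a0 th Ai r mu z T : (a0 < K)%nat -> a0 <> adag ->
  Param d K adag a0 th Ai r mu z -> (forall i, (i<d)%nat -> T i = img K mu z i) ->
  conv d (fun z => exists a, (a<K)%nat /\ a <> adag /\ Cq d (Ai a) (th a) r z) T.
Proof. intros H0 H0' [HP [_ Hs]] HT. exists K, mu, z. split; [|split; auto].
 intros k Hk. destruct (HP k Hk) as [Hm Hc]. split; auto. exists (pick adag a0 k).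
 destruct (pick_prop K adag a0 k H0 H0' Hk). auto. Qed.

Lemma param_inf d K adag a0 th Ai r T : (a0 < K)%nat -> a0 <> adag -> 0 <= r ->
  exists D, (forall mu z, Param d K adag a0 th Ai r mu z -> D <= dist2 d T (img K mu z)) /\
    (forall eps, 0 < eps -> exists mu z, Param d K adag a0 th Ai r mu z /\ dist2 d T (img K mu z) < D + eps).
Proof. intros Ha0 Ha0' Hr.
 set (E := fun v => exists mu z, Param d K adag a0 th Ai r mu z /\ v = - dist2 d T (img K mu z)).
 destruct (completeness E) as [M [HM1 HM2]].
 { exists 0. intros v [mu [z [_ ->]]]. pose proof (dot_self_nonneg d (vsub T (img K mu z))). unfold dist2. lra. }
 { exists (- dist2 d T (img K (fun a => if Nat.eqb a a0 then 1 else 0) (fun a => th (pick adag a0 a)))).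
   exists (fun a => if Nat.eqb a a0 then 1 else 0), (fun a => th (pick adag a0 a)). split; auto.
   split; [|split].
   - intros a Ha. split; [destruct (Nat.eqb a a0); lra|]. unfold Cq. rewrite vsub_self, dot_zero_l. nra.
   - destruct (Nat.eqb adag a0) eqn:E'; auto. apply Nat.eqb_eq in E'. congruence.
   - exact (rsum_kron K a0 (fun _ => 1) Ha0). }
 exists (- M). split.
 - intros mu z Hp. assert (E (- dist2 d T (img K mu z))) by (exists mu, z; auto). apply HM1 in H. lra.
 - intros eps He. apply NNPP. intros Hn. assert (M <= M - eps); [|lra]. apply HM2.
   intros v [mu [z [Hp ->]]]. destruct (Rle_or_lt (- dist2 d T (img K mu z)) (M - eps)); auto.
   exfalso. apply Hn. exists mu, z. split; auto. lra.
Qed.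

Lemma cv_ext u v l : (forall m, u m = v m) -> Un_cv u l -> Un_cv v l.
Proof. intros H Hu e He. destruct (Hu e He) as [N HN]. exists N. intros n Hn. rewrite <- H. auto. Qed.

Lemma param_min d K adag a0 th Ai r T : (a0 < K)%nat -> a0 <> adag -> (adag < K)%nat -> 0 <= r ->
 (forall a i, (a<K)%nat -> a <> adag -> (i<d)%nat -> exists B, forall z, Cq d (Ai a) (th a) r z -> Rabs (z i) <= B) ->
 exists mu z, Param d K adag a0 th Ai r mu z /\
   forall mu' z', Param d K adag a0 th Ai r mu' z' -> dist2 d T (img K mu z) <= dist2 d T (img K mu' z').
Proof. intros Ha0 Ha0' Had Hr HB.
 destruct (param_inf d K adag a0 th Ai r T Ha0 Ha0' Hr) as [D [HD1 HD2]].
 assert (Hseq : forall m, exists p : (nat -> R) * (nat -> vec), Param d K adag a0 th Ai r (fst p) (snd p) /\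
    dist2 d T (img K (fst p) (snd p)) < D + / (INR m + 1)).
 { intros m. destruct (HD2 (/ (INR m + 1))) as [mu [z [H1 H2]]].
   { apply Rinv_0_lt_compat. pose proof (pos_INR m). lra. }
   exists (mu, z). auto. }
 destruct (choice_fun _ Hseq) as [P HP].
 set (L := map (@inl nat (nat*nat)) (seq 0 K) ++ map (@inr nat (nat*nat)) (list_prod (seq 0 K) (seq 0 d))).
 set (u := fun (j : nat + nat*nat) m => match j with inl a => fst (P m) a | inr (a,i) => snd (P m) a i end).
 destruct (bwL L u) as [phi [lim [Hphi Hlim]]].
 { intros j Hj. unfold L in Hj. apply in_app_or in Hj. destruct Hj as [Hj|Hj]; apply in_map_iff in Hj; destruct Hj as [x [<- Hx]].
   - apply in_seq in Hx. exists 1. intros m. simpl. destruct (HP m) as [[Hp1 [_ Hp3]] _].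
     destruct (Hp1 x ltac:(lia)) as [Hx0 _]. rewrite Rabs_pos_eq by auto. rewrite <- Hp3.
     apply (rsum_le_term K (fst (P m)) x); [intros k Hk; apply Hp1; auto | lia].
   - destruct x as [a i]. apply in_prod_iff in Hx. destruct Hx as [Ha Hi]. apply in_seq in Ha, Hi.
     destruct (pick_prop K adag a0 a Ha0 Ha0' ltac:(lia)) as [Hpa Hpa'].
     destruct (HB (pick adag a0 a) i Hpa Hpa' ltac:(lia)) as [B HBB]. exists B. intros m. simpl.
     apply HBB. destruct (HP m) as [[Hp1 _] _]. apply Hp1; lia. }
 set (mu := fun a => lim (inl a)). set (z := fun a i => lim (inr (a, i))).
 assert (Hmu : forall a, (a < K)%nat -> Un_cv (fun m => fst (P (phi m)) a) (mu a)).
 { intros a Ha. apply (Hlim (inl a)). unfold L. apply in_or_app. left. apply in_map. apply in_seq. lia. }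
 assert (Hz : forall a, (a < K)%nat -> cvv d (fun m => snd (P (phi m)) a) (z a)).
 { intros a Ha i Hi. apply (Hlim (inr (a, i))). unfold L. apply in_or_app. right. apply in_map. apply in_prod; apply in_seq; lia. }
 assert (Hpar : Param d K adag a0 th Ai r mu z).
 { split; [|split].
   - intros a Ha. split.
     + apply (lim_le (fun _ => 0) (fun m => fst (P (phi m)) a)); [apply cv_const|auto|]. intros m. apply (HP (phi m)); auto.
     + unfold Cq. apply (lim_le _ (fun _ => r * r) _ _ (cv_quad _ _ _ _ (cvv_sub _ _ _ _ _ (Hz a Ha) (cvv_const _ _))) (cv_const _)).
       intros m. apply (HP (phi m)); auto.
   - apply (UL_sequence (fun m => fst (P (phi m)) adag)); auto. apply (cv_ext (fun _ => 0)); [|apply cv_const].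
     intros m. symmetry. apply (HP (phi m)).
   - apply (UL_sequence (fun m => rsum K (fst (P (phi m))))).
     + apply (cv_rsum K (fun k m => fst (P (phi m)) k)). auto.
     + apply (cv_ext (fun _ => 1)); [|apply cv_const]. intros m. symmetry. apply (HP (phi m)). }
 exists mu, z. split; auto.
 assert (Himg : cvv d (fun m => img K (fst (P (phi m))) (snd (P (phi m)))) (img K mu z)).
 { intros i Hi. unfold img. apply (cv_rsum K (fun a m => fst (P (phi m)) a * snd (P (phi m)) a i)).
   intros k Hk. apply CV_mult; auto. apply Hz; auto. }
 assert (Hle : dist2 d T (img K mu z) <= D).
 { replace D with (D + 0) by ring. unfold dist2.
   apply (lim_le _ (fun m => D + / (INR (phi m) + 1)) _ _ (cv_dot _ _ _ _ _ (cvv_sub _ _ _ _ _ (cvv_const _ _) Himg) (cvv_sub _ _ _ _ _ (cvv_const _ _) Himg))).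
   - apply CV_plus; [apply cv_const|]. apply (cv_sub (fun m => / (INR m + 1))); auto. apply cv_inv_seq.
   - intros m. left. apply (HP (phi m)). }
 intros mu' z' Hp'. specialize (HD1 mu' z' Hp'). lra. Qed.

Lemma perturb d K adag a0 th Ai r mu z a zz t : (a0 < K)%nat -> a0 <> adag -> 0 <= r ->
 (a < K)%nat -> a <> adag -> symmetric d (Ai a) -> psd d (Ai a) ->
 Param d K adag a0 th Ai r mu z -> Cq d (Ai a) (th a) r zz -> 0 < t < 1 ->
 exists mu' z', Param d K adag a0 th Ai r mu' z' /\
   img K mu' z' = (fun i => img K mu z i + t * (zz i - img K mu z i)).
Proof. intros Ha0 Ha0' Hr Ha Hna HS HPs [Hp1 [Hp2 Hp3]] Hc Ht.
 assert (Hma : 0 <= mu a) by apply (Hp1 a Ha).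
 set (den := (1-t) * mu a + t). assert (Hden : 0 < den) by (unfold den; nra).
 exists (fun b => (1-t) * mu b + t * (if Nat.eqb b a then 1 else 0)).
 exists (fun b => if Nat.eqb b a then (fun i => ((1-t) * mu a * z a i + t * zz i) / den) else z b).
 assert (Hpa : pick adag a0 a = a). { unfold pick. destruct (Nat.eqb a adag) eqn:E; auto. apply Nat.eqb_eq in E; congruence. }
 split; [split; [|split]|].
 - intros b Hb. destruct (Hp1 b Hb) as [Hmb Hcb]. split.
   + destruct (Nat.eqb b a); nra.
   + destruct (Nat.eqb b a) eqn:E; auto. apply Nat.eqb_eq in E. subst b. rewrite Hpa in *.
     replace (fun i => ((1-t) * mu a * z a i + t * zz i) / den) with
        (fun i => ((1-t) * mu a / den) * z a i + (t / den) * zz i)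
       by (apply functional_extensionality; intros; field; lra).
     apply (Cq_convex d (Ai a) (th a) r (z a) zz); auto; [idtac|idtac|unfold den; field; fold den; lra].
     * apply Rmult_le_pos; [nra| left; apply Rinv_0_lt_compat; auto].
     * apply Rmult_le_pos; [lra| left; apply Rinv_0_lt_compat; auto].

 - rewrite Hp2. destruct (Nat.eqb adag a) eqn:E; [apply Nat.eqb_eq in E; congruence|]. ring.
 - rewrite rsum_plus, rsum_scal, rsum_scal, Hp3. rewrite (rsum_kron K a (fun _ => 1) Ha). ring.
 - apply functional_extensionality; intros i. unfold img.
   rewrite (rsum_ext K _ (fun b => (1-t) * (mu b * z b i) + (if Nat.eqb b a then t * zz i else 0))).
   + rewrite rsum_plus, rsum_scal. rewrite (rsum_kron K a (fun _ => t * zz i) Ha). ring.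
   + intros b Hb. destruct (Nat.eqb b a) eqn:E.
     * cbv beta iota. apply Nat.eqb_eq in E; subst b. replace ((1 - t) * mu a + t * 1) with den by (unfold den; ring). field. lra.
     * ring. Qed.

Lemma separation d K adag a0 th Ai r T : (a0 < K)%nat -> a0 <> adag -> (adag < K)%nat -> 0 <= r ->
 (forall a, (a<K)%nat -> a <> adag -> symmetric d (Ai a) /\ psd d (Ai a)) ->
 (forall a i, (a<K)%nat -> a <> adag -> (i<d)%nat -> exists B, forall z, Cq d (Ai a) (th a) r z -> Rabs (z i) <= B) ->
 ~ conv d (fun z => exists a, (a<K)%nat /\ a <> adag /\ Cq d (Ai a) (th a) r z) T ->
 exists e, 0 < dot d e e /\ forall a zz, (a<K)%nat -> a <> adag -> Cq d (Ai a) (th a) r zz ->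
   dot d e zz <= dot d e T - dot d e e.
Proof. intros Ha0 Ha0' Had Hr HSP HB Hnc.
 destruct (param_min d K adag a0 th Ai r T Ha0 Ha0' Had Hr HB) as [mu [z [Hp Hmin]]].
 set (s := img K mu z). set (e := vsub T s). exists e.
 destruct (Rle_or_lt (dot d e e) 0) as [H0|H0].
 { exfalso. apply Hnc. apply (param_conv d K adag a0 th Ai r mu z T Ha0 Ha0' Hp).
   intros i Hi. assert (dot d e e = 0) by (pose proof (dot_self_nonneg d e); lra).
   pose proof (rsum_sq_zero d e H i Hi). unfold e, vsub in H1. fold s. lra. }
 split; auto. intros a zz Ha Hna Hc.
 destruct (HSP a Ha Hna) as [HS HPs].
 set (f := vsub zz s).
 assert (Hd : forall t, 0 < t < 1 -> dot d e e <= dot d e e - 2 * t * dot d e f + t * t * dot d f f).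
 { intros t Ht. destruct (perturb d K adag a0 th Ai r mu z a zz t Ha0 Ha0' Hr Ha Hna HS HPs Hp Hc Ht) as [mu' [z' [Hp' Himg]]].
   pose proof (Hmin mu' z' Hp') as Hm. rewrite Himg in Hm. fold s in Hm. unfold dist2 in Hm. fold e in Hm.
   replace (vsub T (fun i => s i + t * (zz i - s i))) with (vsub e (vscal t f)) in Hm
     by (apply functional_extensionality; intros; unfold vsub, vscal, e, f, vsub; ring).
   rewrite !dot_subl, !dot_subr, !dot_scall, !dot_scalr, (dot_comm d f e) in Hm. lra. }
 assert (Hef : dot d e f <= 0).
 { destruct (Rle_or_lt (dot d e f) 0) as [|Hpos]; auto. exfalso.
   pose proof (dot_self_nonneg d f) as Hff.
   set (ef := dot d e f) in *. set (ff := dot d f f) in *.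
   set (t := ef / (ff + 2 * ef)).
   assert (Ht1 : t * (ff + 2 * ef) = ef) by (unfold t; field; lra).
   assert (Ht0 : 0 < t) by (unfold t; apply Rdiv_lt_0_compat; lra).
   assert (Ht : 0 < t < 1). { split; auto. destruct (Rlt_or_le t 1); auto. assert (0 <= (t - 1) * (ff + 2 * ef)) by (apply Rmult_le_pos; lra). nra. }
   specialize (Hd t Ht).
   assert (t * ff < 2 * ef) by nra.
   nra. }
 assert (E2 : vsub T zz = vsub e f) by (apply functional_extensionality; intros; unfold vsub, e, f, vsub; ring).
 assert (E3 : dot d e (vsub T zz) = dot d e e - dot d e f) by (rewrite E2, dot_subr; auto).
 rewrite dot_subr in E3. lra. Qed.

Lemma rsum_le n f g : (forall k, (k < n)%nat -> f k <= g k) -> rsum n f <= rsum n g.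
Proof. induction n; simpl; intros H; [lra|]. pose proof (H n ltac:(lia)). pose proof (IHn ltac:(intros; apply H; lia)). lra. Qed.

Lemma ellipsoid_bound d A Ai th r i : symmetric d A -> psd d A -> is_inv d A Ai -> (i < d)%nat ->
  exists B, forall z, Cq d Ai th r z -> Rabs (z i) <= B.
Proof. intros HS HP HI Hi. destruct (inv_sym d A Ai HS HI) as [HSi HIi]. pose proof (inv_psd d A Ai HP HI) as HPi.
 set (ei := fun k => if Nat.eqb k i then 1 else 0).
 set (q := dot d (mv d A ei) (mv d Ai (mv d A ei))).
 exists (Rabs (th i) + (r * r * q + 1)). intros z Hz. unfold Cq in Hz.
 set (v := vsub z th) in *.
 assert (Hv : v i = dot d v (mv d Ai (mv d A ei))).
 { rewrite (dot_ext d v (mv d Ai (mv d A ei)) v ei); auto. 2:{ intros; apply mv_inv; auto. }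
   unfold dot, ei. symmetry. apply rsum_kron'; auto. }
 pose proof (cauchy_schwarz d Ai v (mv d A ei) HSi HPi) as CS. rewrite <- Hv in CS. fold q in CS.
 assert (0 <= q) by apply HPi. assert (0 <= dot d v (mv d Ai v)) by apply HPi.
 assert (Hvi : v i * v i <= r * r * q). { replace (v i * v i) with (v i ^ 2) by ring. eapply Rle_trans; [exact CS|]. apply Rmult_le_compat_r; auto. }
 assert (Rabs (v i) <= r * r * q + 1). { destruct (Rle_or_lt (Rabs (v i)) 1). nra. pose proof (Rabs_pos (v i)). assert (Rabs (v i) * Rabs (v i) <= r*r*q). { rewrite <- Rabs_mult. rewrite Rabs_pos_eq; nra. } nra. }
 replace (z i) with (th i + v i) by (unfold v, vsub; ring).
 eapply Rle_trans; [apply Rabs_triang|]. lra. Qed.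

Theorem mainTheorem3
  (d K adag : nat) (ups delta xi c : R) (xdag : vec)
  (theta : nat -> vec) (V Vinv Ainv : nat -> mat) :
  (2 <= d)%nat -> (2 <= K)%nat -> (adag < K)%nat ->
  0 < ups -> 0 < delta < 1 -> 0 < xi ->
  delta <= INR (K - 1) / 2 ->
  (forall a, (a < K)%nat ->
     symmetric d (V a) /\ posdef d (V a) /\ is_inv d (V a) (Vinv a)) ->
  (forall a, (a < K)%nat -> a <> adag ->
     is_inv d (madd (Vinv a) (Vinv adag)) (Ainv a)) ->
  (* c = Phi^{-1} (1 - delta / (K - 1)) *)
  Phi c = 1 - delta / INR (K - 1) ->
  let C' := fun a (z : vec) => Mnorm d (Ainv a) (vsub z (theta a)) <= ups * c in
  let constr := fun (y : vec) a =>
    dot d (vadd xdag y) (vsub (theta adag) (theta a)) - xi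
      >= ups * c * Mnorm d (madd (Vinv a) (Vinv adag)) (vadd xdag y) in
  (forall (y : vec) a, (a < K)%nat -> a <> adag ->
     let vals := fun v => exists z, C' a z /\ v = dot d z (vadd xdag y) in
     (exists m, is_max vals m) /\
     (forall m, is_max vals m ->
        (constr y a <-> dot d (vadd xdag y) (theta adag) - xi >= m)))
  /\
  ((exists y : vec, forall a, (a < K)%nat -> a <> adag -> constr y a) <->
   ~ conv d (fun z => exists a, (a < K)%nat /\ a <> adag /\ C' a z) (theta adag)).
Proof.
 intros Hd HK Had Hups Hdel Hxi Hdel2 HV HA Hc C' constr.
 assert (HK1 : 1 <= INR (K - 1)). { replace 1 with (INR 1) by reflexivity. apply le_INR. lia. }
 assert (Hc0 : 0 <= c).
 { destruct (Rle_or_lt 0 c) as [|Hneg]; auto. exfalso. pose proof (Phi_neg c Hneg).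
   assert (delta / INR (K - 1) <= / 2).
   { unfold Rdiv. apply Rmult_le_reg_r with (INR (K - 1)); [lra|]. rewrite Rmult_assoc, Rinv_l by lra. lra. }
   lra. }
 set (r := ups * c). assert (Hr : 0 <= r) by (unfold r; nra).
 assert (HVi : forall a, (a < K)%nat -> symmetric d (Vinv a) /\ psd d (Vinv a)).
 { intros a Ha. destruct (HV a Ha) as [HS [HP HI]]. split. apply (inv_sym d (V a)); auto.
   apply (inv_psd d (V a)); auto. apply posdef_psd; auto. }
 set (A := fun a => madd (Vinv a) (Vinv adag)).
 assert (HAp : forall a, (a < K)%nat -> a <> adag -> symmetric d (A a) /\ psd d (A a) /\ is_inv d (A a) (Ainv a)
    /\ symmetric d (Ainv a) /\ psd d (Ainv a)).
 { intros a Ha Hna. destruct (HVi a Ha), (HVi adag Had).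
   assert (symmetric d (A a)) by (apply sym_add; auto). assert (psd d (A a)) by (apply psd_add; auto).
   assert (is_inv d (A a) (Ainv a)) by (apply HA; auto).
   repeat split; auto. apply (inv_sym d (A a)); auto. apply (inv_psd d (A a)); auto. }
 assert (Hmax : forall w a, (a < K)%nat -> a <> adag ->
   is_max (fun v => exists z, C' a z /\ v = dot d z w) (dot d (theta a) w + r * Mnorm d (A a) w)).
 { intros w a Ha Hna. destruct (HAp a Ha Hna) as [H1 [H2 [H3 _]]]. apply support_max; auto. }
 assert (HC'q : forall a z, (a < K)%nat -> a <> adag -> (C' a z <-> Cq d (Ainv a) (theta a) r z)).
 { intros a z Ha Hna. destruct (HAp a Ha Hna) as [_ [_ [_ [_ HP]]]]. unfold C', Cq. apply Q_norm_iff; auto. }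
 split.
 - intros y a Ha Hna vals. split.
   + eexists. apply (Hmax (vadd xdag y) a Ha Hna).
   + intros m Hm. rewrite (is_max_unique _ _ _ Hm (Hmax (vadd xdag y) a Ha Hna)).
     unfold constr. rewrite dot_subr, (dot_comm d (theta a)). fold r. unfold A. split; intros; lra.
 - split.
   + intros [y Hy] [n [lam [p [Hp [Hs Hx]]]]].
     set (w := vadd xdag y).
     assert (Hb : forall z a, (a < K)%nat -> a <> adag -> C' a z -> dot d z w <= dot d w (theta adag) - xi).
     { intros z a Ha Hna Hz. pose proof (proj2 (Hmax w a Ha Hna) (dot d z w) (ex_intro _ z (conj Hz eq_refl))).
       specialize (Hy a Ha Hna). unfold constr in Hy. fold w in Hy. rewrite dot_subr, (dot_comm d w (theta a)) in Hy.
       fold r in Hy. unfold A in H. lra. }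
     assert (E : dot d w (theta adag) = rsum n (fun k => lam k * dot d w (p k))).
     { rewrite (dot_ext d w (theta adag) w (fun i => rsum n (fun k => lam k * p k i))); auto.
       unfold dot. rewrite (rsum_ext d _ (fun i => rsum n (fun k => lam k * (w i * p k i))))
         by (intros; rewrite <- rsum_scal; apply rsum_ext; intros; ring).
       rewrite rsum_swap. apply rsum_ext; intros. rewrite <- rsum_scal. auto. }
     assert (dot d w (theta adag) <= rsum n (fun k => lam k * (dot d w (theta adag) - xi))).
     { rewrite E at 1. apply rsum_le. intros k Hk. destruct (Hp k Hk) as [Hl [a [Ha [Hna Hz]]]].
       apply Rmult_le_compat_l; auto. rewrite dot_comm. apply (Hb _ a); auto. }
     rewrite rsum_scalr, Hs in H. lra.
   + intros Hnc.
     set (a0 := if Nat.eqb adag 0 then 1%nat else 0%nat).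
     assert (Ha0 : (a0 < K)%nat /\ a0 <> adag). { unfold a0. destruct (Nat.eqb adag 0) eqn:E; [apply Nat.eqb_eq in E|apply Nat.eqb_neq in E]; lia. }
     destruct Ha0 as [Ha0 Ha0'].
     destruct (separation d K adag a0 theta Ainv r (theta adag) Ha0 Ha0' Had Hr) as [e [He Hsep]].
     { intros a Ha Hna. destruct (HAp a Ha Hna) as [_ [_ [_ [H1 H2]]]]. auto. }
     { intros a i Ha Hna Hi. destruct (HAp a Ha Hna) as [H1 [H2 [H3 _]]]. apply (ellipsoid_bound d (A a)); auto. }
     { intros Hcv. apply Hnc. revert Hcv. apply conv_mono. intros z [a [Ha [Hna Hz]]]. exists a. repeat split; auto. apply HC'q; auto. }
     set (D := dot d e e).
     set (w := vscal (xi / D) e).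
     exists (vsub w xdag). intros a Ha Hna. unfold constr.
     replace (vadd xdag (vsub w xdag)) with w by (apply functional_extensionality; intros; unfold vadd, vsub; ring).
     destruct (proj1 (Hmax w a Ha Hna)) as [z [Hz Hzv]].
     assert (Hez : dot d e z <= dot d e (theta adag) - D) by (apply Hsep with a; auto; apply HC'q; auto).
     assert (dot d z w <= dot d w (theta adag) - xi).
     { unfold w. rewrite dot_scalr, dot_scall, (dot_comm d z). 
       assert (0 < xi / D) by (apply Rdiv_lt_0_compat; auto).
       assert (xi / D * dot d e z <= xi / D * (dot d e (theta adag) - D)) by (apply Rmult_le_compat_l; lra).
       replace (xi / D * (dot d e (theta adag) - D)) with (xi / D * dot d e (theta adag) - xi) in H0 by (field; unfold D; lra).
       lra. }
     rewrite dot_subr, (dot_comm d w (theta a)). fold r. unfold A in Hzv. lra.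
Qed.
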